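(* Let $\mathcal S$ be a system and $\mathcal T$ a target behavior. If $\tilde{\mathcal T}_1$ and $\tilde{\mathcal T}_2$ are both optimal approximations of $\mathcal T$ on $\mathcal S$, then $\tilde{\mathcal T}_1\sim\tilde{\mathcal T}_2$; i.e., the optimal approximation is unique up to simulation equivalence.
   Context: A behavior is a tuple $\mathcal B=\langle B,\mathcal A,b_0,\varrho\rangle$ with $B$ a finite set of states, $\mathcal A$ a set of actions, $b_0\in B$ the initial state, and $\varrho\subseteq B\times\mathcal A\times B$ a transition relation (written $b\xrightarrow{a}b'$); every state is assumed to have at least one outgoing transition. A system is a tuple $\mathcal S=\langle\mathcal B_1,\dots,\mathcal B_n\rangle$ of behaviors $\mathcal B_i=\langle B_i,\mathcal A_i,b_{i0},\varrho_i\rangle$. Its enacted system has states $B_1\times\dots\times B_n$ (for a state $s$, $\mathrm{beh}_i(s)$ denotes its $i$-th component), initial state $s_0=\langle b_{10},\dots,b_{n0}\rangle$, and transitions $s\xrightarrow{a,k}s'$ iff $\mathrm{beh}_k(s)\xrightarrow{a}\mathrm{beh}_k(s')$ in $\mathcal B_k$ and $\mathrm{beh}_i(s')=\mathrm{beh}_i(s)$ for all $i\neq k$. A system history is a finite sequence $h=s^0\xrightarrow{a^1,k^1}s^1\cdots\xrightarrow{a^\ell,k^\ell}s^\ell$ of enacted-system transitions with $s^0=s_0$; $\mathcal H_{\mathcal S}$ is the set of system histories, $|h|=\ell$, $\mathrm{last}(h)=s^\ell$, and $h|_i$ is the prefix of length $i$. A target behavior $\mathcal T=\langle T,\mathcal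 A,t_0,\varrho_T\rangle$ is a (possibly nondeterministic) behavior; a trace of $\mathcal T$ is a finite or infinite sequence $t^0\xrightarrow{a^1}t^1\xrightarrow{a^2}\cdots$ with $t^0=t_0$ and each step in $\varrho_T$. A controller for $\mathcal T$ on $\mathcal S$ is a partial function $C:\mathcal H_{\mathcal S}\times\varrho_T\to\{1,\dots,n\}$. $C$ realizes a trace $\tau=t^0\xrightarrow{a^1}t^1\xrightarrow{a^2}\cdots$ of $\mathcal T$ if for every $j$ such that $\tau$ has a step $t^j\xrightarrow{a^{j+1}}t^{j+1}$, and every system history $h=s^0\xrightarrow{a^1,k^1}\cdots\xrightarrow{a^j,k^j}s^j$ with $k^i=C(h|_{i-1},t^{i-1}\xrightarrow{a^i}t^i)$ for all $1\le i\le j$, the value $k=C(h,t^j\xrightarrow{a^{j+1}}t^{j+1})$ is defined and $\mathrm{beh}_k(s^j)$ has an outgoing $a^{j+1}$-transition in $\mathcal B_k$. $C$ is an exact composition for $\mathcal T$ on $\mathcal S$ if it realizes all traces of $\mathcal T$. For target behaviors $\mathcal T_i=\langle T_i,\mathcal A,t_{i0},\varrho_i\rangle$ ($i=1,2$), a simulation of $\mathcal T_2$ by $\mathcal T_1$ is a relation $R\subseteq T_2\times T_1$ such that $\langle t_2,t_1\rangle\in R$ and $\langle t_2,a,t_2'\rangle\in\varrho_2$ imply some $\langle t_1,a,t_1'\rangle\in\varrho_1$ with $\langle t_2',t_1'\rangle\in R$. $\mathcal T_2\preceq\mathcal T_1$ iff some simulation contains $\langle t_{20},t_{10}\rangle$;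 $\mathcal T_2\prec\mathcal T_1$ iff $\mathcal T_2\preceq\mathcal T_1$ and not $\mathcal T_1\preceq\mathcal T_2$; $\mathcal T_1\sim\mathcal T_2$ iff both $\preceq$ hold. $\tilde{\mathcal T}$ is an approximation of $\mathcal T$ on $\mathcal S$ iff $\tilde{\mathcal T}\preceq\mathcal T$ and there is an exact composition for $\tilde{\mathcal T}$ on $\mathcal S$. $\tilde{\mathcal T}$ is an optimal approximation of $\mathcal T$ on $\mathcal S$ iff it is an approximation of $\mathcal T$ on $\mathcal S$ and there is no approximation $\tilde{\mathcal T}'$ of $\mathcal T$ on $\mathcal S$ with $\tilde{\mathcal T}\prec\tilde{\mathcal T}'$. *)

(* Defs.v *)
From mathcomp Require Import all_boot.
Set Implicit Arguments. Unset Strict Implicit. Unset Printing Implicit Defensive.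

Record behavior (Act : Type) := Behavior {
  bst : finType;
  binit : bst;
  btr : bst -> Act -> bst -> Prop;
  btotal : forall b : bst, exists a b', btr b a b'
}.

(* A system of n behaviors, indexed by 'I_n (i.e. {1,...,n} shifted). *)
Definition system (Act : Type) (n : nat) := 'I_n -> behavior Act.

Definition sstate Act n (S : system Act n) := forall i : 'I_n, bst (S i).

Definition sinit Act n (S : system Act n) : sstate S := fun i => binit (S i).

Definition etr Act n (S : system Act n) (s : sstate S) (a : Act) (k : 'I_n)
  (s' : sstate S) : Prop :=
  btr (s k) a (s' k) /\ forall i, i <> k -> s' i = s i.

(* A system history s^0 -(a1,k1)-> s^1 ... -(al,kl)-> s^l with s^0 = s_0 is
   represented by the list of its steps (a^i, k^i, s^i). *)
Definition hstep Act n (S : system Act n) := (Act * 'I_n * sstate S)%type.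
Definition history Act n (S : system Act n) := seq (hstep S).

Fixpoint hist_from Act n (S : system Act n) (s : sstate S) (h : history S)
  : Prop :=
  match h with
  | [::] => True
  | (a, k, s') :: h' => etr s a k s' /\ hist_from s' h'
  end.

Definition is_history Act n (S : system Act n) (h : history S) : Prop :=
  hist_from (sinit S) h.

Definition hlast Act n (S : system Act n) (h : history S) : sstate S :=
  last (sinit S) [seq x.2 | x <- h].

(* A controller: partial function H_S x rho_T -> {1..n}; a target transition
   t -a-> t' is passed as its three components. *)
Definition controller Act n (S : system Act n) (T : behavior Act) :=
  history S -> bst T -> Act -> bst T -> option 'I_n.

(* Traces of T, finite or infinite: [tlen = Some l] means the trace
   t^0 -a^1-> ... -a^l-> t^l, [tlen = None] means an infinite trace.
   State t^j is [tst j], action a^j is [tact j] (tact 0 unused). *)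
Record trace Act (T : behavior Act) := Trace {
  tlen : option nat;
  tst : nat -> bst T;
  tact : nat -> Act
}.

(* "the trace has a step t^j -a^{j+1}-> t^{j+1}" *)
Definition has_step Act (T : behavior Act) (tau : trace T) (j : nat) : Prop :=
  match tlen tau with None => True | Some l => j < l end.

Definition is_trace Act (T : behavior Act) (tau : trace T) : Prop :=
  tst tau 0 = binit T /\
  forall j, has_step tau j -> btr (tst tau j) (tact tau j.+1) (tst tau j.+1).

(* h = s^0 -(a^1,k^1)-> ... -(a^j,k^j)-> s^j is a system history whose actions
   are those of tau and with k^i = C(h|_{i-1}, t^{i-1} -a^i-> t^i). *)
Definition follows Act n (S : system Act n) (T : behavior Act)
  (C : controller S T) (tau : trace T) (j : nat) (h : history S) : Prop :=
  is_history h /\ size h = j /\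
  forall i, i < j ->
    match onth h i with
    | Some (a, k, _) => a = tact tau i.+1 /\
        C (take i h) (tst tau i) (tact tau i.+1) (tst tau i.+1) = Some k
    | None => False
    end.

Definition realizes Act n (S : system Act n) (T : behavior Act)
  (C : controller S T) (tau : trace T) : Prop :=
  forall j, has_step tau j ->
  forall h, follows C tau j h ->
  exists k, C h (tst tau j) (tact tau j.+1) (tst tau j.+1) = Some k /\
    exists b', btr (hlast h k) (tact tau j.+1) b'.

Definition exact_composition Act n (S : system Act n) (T : behavior Act)
  (C : controller S T) : Prop :=
  forall tau : trace T, is_trace tau -> realizes C tau.

Definition is_simulation Act (T2 T1 : behavior Act)
  (R : bst T2 -> bst T1 -> Prop) : Prop :=
  forall t2 t1 a t2', R t2 t1 -> btr t2 a t2' ->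
    exists t1', btr t1 a t1' /\ R t2' t1'.

Definition simulated Act (T2 T1 : behavior Act) : Prop :=
  exists R, is_simulation R /\ R (binit T2) (binit T1).

Definition strictly_simulated Act (T2 T1 : behavior Act) : Prop :=
  simulated T2 T1 /\ ~ simulated T1 T2.

Definition sim_equiv Act (T1 T2 : behavior Act) : Prop :=
  simulated T1 T2 /\ simulated T2 T1.

Definition approximation Act n (S : system Act n) (T Tt : behavior Act) : Prop :=
  simulated Tt T /\ exists C : controller S Tt, exact_composition C.

Definition optimal_approximation Act n (S : system Act n) (T Tt : behavior Act)
  : Prop :=
  approximation S T Tt /\
  ~ (exists Tt' : behavior Act, approximation S T Tt' /\ strictly_simulated Tt Tt').

(* Main.v *)
From Stdlib Require Import Classical.
Require Import Defs.
From mathcomp Require Import all_boot.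
Set Implicit Arguments. Unset Strict Implicit.

Lemma has_step_mono Act (T : behavior Act) (tau : trace T) i j :
  i <= j -> has_step tau j -> has_step tau i.
Proof. rewrite /has_step; case: (tlen tau) => // l Hij Hj; exact: leq_ltn_trans Hij Hj. Qed.

Section Side.
Variables (Act : Type) (n : nat) (S : system Act n) (B U : behavior Act).
Variables (C : controller S B) (CU : controller S U).
Variables (p : bst U -> bst B) (L : bst U -> Prop).
Hypothesis Hp0 : p (binit U) = binit B.
Hypothesis H1 : forall a u', btr (binit U) a u' -> L u' -> btr (binit B) a (p u').
Hypothesis H2 : forall u a u', L u -> btr u a u' -> L u' /\ btr (p u) a (p u').
Hypothesis H3 : forall h u a u', (u = binit U \/ L u) -> L u' ->
  CU h u a u' = C h (p u) a (p u').

Lemma side_ok : exact_composition C -> forall tau : trace U, is_trace tau ->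
  (has_step tau 0 -> L (tst tau 1)) -> realizes CU tau.
Proof.
move=> EC tau [T0 Tst] HL.
have Hinv : forall i, has_step tau i -> L (tst tau i.+1).
  elim=> [|i IH] Hi; first exact: HL.
  have Hi' : has_step tau i := has_step_mono (leqnSn i) Hi.
  exact: (H2 (IH Hi') (Tst _ Hi)).1.
have pre : forall i, has_step tau i -> (tst tau i = binit U \/ L (tst tau i)).
  case=> [|i] Hi; [by left|right; exact: (Hinv i (has_step_mono (leqnSn i) Hi))].
set tau' := Trace (tlen tau) (fun j => p (tst tau j)) (tact tau).
have Htr : is_trace tau'.
  split; first by rewrite /= T0 Hp0.
  move=> [|j] Hj /=.
    rewrite T0 Hp0; apply: H1; first by rewrite -T0; exact: (Tst 0 Hj).
    exact: (Hinv 0 Hj).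
  have := H2 (Hinv j (has_step_mono (leqnSn j) Hj)) (Tst _ Hj). by case.
move=> j Hj h [Hh [Hs Hf]].
have Hf' : follows C tau' j h.
  split=> //; split=> // i Hi.
  have Hsi : has_step tau i := has_step_mono (ltnW Hi) Hj.
  move: (Hf i Hi); case: (onth h i) => // [[[a k] s]] [-> HC]; split=> //.
  by rewrite -H3 //; [exact: pre | exact: Hinv].
have [k [Hk Hb]] := EC tau' Htr j Hj h Hf'.
exists k; split=> //. by rewrite H3 //; [exact: pre | exact: Hinv].
Qed.
End Side.

Section Union.
Variables (Act : Type) (T1 T2 : behavior Act).

Definition ustate : finType := option (bst T1 + bst T2).

Definition utr (u : ustate) (a : Act) (u' : ustate) : Prop :=
  match u, u' with
  | None, Some (inl y) => btr (binit T1) a y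
  | None, Some (inr y) => btr (binit T2) a y
  | Some (inl x), Some (inl y) => btr x a y
  | Some (inr x), Some (inr y) => btr x a y
  | _, _ => False
  end.

Lemma utotal (u : ustate) : exists a u', utr u a u'.
Proof.
case: u => [[x|x]|].
- by have [a [y H]] := btotal x; exists a, (Some (inl y)).
- by have [a [y H]] := btotal x; exists a, (Some (inr y)).
- by have [a [y H]] := btotal (binit T1); exists a, (Some (inl y)).
Qed.

Definition UB : behavior Act := @Behavior Act ustate None utr utotal.

Definition p1 (u : ustate) : bst T1 := if u is Some (inl x) then x else binit T1.
Definition p2 (u : ustate) : bst T2 := if u is Some (inr x) then x else binit T2.
Definition L1 (u : ustate) : Prop := if u is Some (inl _) then True else False.
Definition L2 (u : ustate) : Prop := if u is Some (inr _) then True else False.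

Variables (n : nat) (S : system Act n) (C1 : controller S T1) (C2 : controller S T2).

Definition CU : controller S UB := fun h u a u' =>
  match u' with
  | Some (inl y) => if u is Some (inr _) then None else C1 h (p1 u) a y
  | Some (inr y) => if u is Some (inl _) then None else C2 h (p2 u) a y
  | None => None
  end.

Lemma CU_exact : exact_composition C1 -> exact_composition C2 ->
  exact_composition CU.
Proof.
move=> E1 E2 tau Htr.
case E: (tst tau 1) => [[y|y]|].
- apply: (@side_ok _ _ S T1 UB C1 CU p1 L1) => //.
  + by move=> a [[?|?]|].
  + by move=> [[?|?]|] a [[?|?]|].
  + by move=> h [[?|?]|] a [[?|?]|] // [].
  + by rewrite E.
- apply: (@side_ok _ _ S T2 UB C2 CU p2 L2) => //.
  + by move=> a [[?|?]|].
  + by move=> [[?|?]|] a [[?|?]|].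
  + by move=> h [[?|?]|] a [[?|?]|] // [].
  + by rewrite E.
- apply: (@side_ok _ _ S T1 UB C1 CU p1 L1) => //.
  + by move=> a [[?|?]|].
  + by move=> [[?|?]|] a [[?|?]|].
  + by move=> h [[?|?]|] a [[?|?]|] // [].
  + move=> H0; have := (proj2 Htr) 0 H0; by rewrite (proj1 Htr) E.
Qed.
End Union.

Lemma sim_trans Act (A B C : behavior Act) :
  simulated A B -> simulated B C -> simulated A C.
Proof.
move=> [R [HR R0]] [Q [HQ Q0]].
exists (fun a c => exists b, R a b /\ Q b c); split; last by exists (binit B).
move=> a c x a' [b [Rab Qbc]] Ht.
have [b' [Hb Rb]] := HR _ _ _ _ Rab Ht.
have [c' [Hc Qc]] := HQ _ _ _ _ Qbc Hb.
by exists c'; split=> //; exists b'.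
Qed.

Lemma sim_left Act (T1 T2 : behavior Act) : simulated T1 (UB T1 T2).
Proof.
exists (fun x (u : ustate T1 T2) => u = Some (inl x) \/ (x = binit T1 /\ u = None)).
split; last by right.
move=> x u a x' [->|[-> ->]] H; by exists (Some (inl x')); split=> //; left.
Qed.

Lemma sim_right Act (T1 T2 : behavior Act) : simulated T2 (UB T1 T2).
Proof.
exists (fun x (u : ustate T1 T2) => u = Some (inr x) \/ (x = binit T2 /\ u = None)).
split; last by right.
move=> x u a x' [->|[-> ->]] H; by exists (Some (inr x')); split=> //; left.
Qed.

Lemma union_approx Act n (S : system Act n) (T T1 T2 : behavior Act) :
  approximation S T T1 -> approximation S T T2 -> approximation S T (UB T1 T2).
Proof.
move=> [[R1 [HR1 R10]] [C1 E1]] [[R2 [HR2 R20]] [C2 E2]].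
split; last by exists (CU C1 C2); exact: CU_exact.
exists (fun (u : ustate T1 T2) t => match u with
  | None => t = binit T | Some (inl x) => R1 x t | Some (inr x) => R2 x t end).
split=> //.
move=> [[x|x]|] t a [[y|y]|] //= Hr Ht.
- exact: HR1 Hr Ht.
- exact: HR2 Hr Ht.
- by rewrite Hr; exact: HR1 R10 Ht.
- by rewrite Hr; exact: HR2 R20 Ht.
Qed.

Lemma opt_dom Act n (S : system Act n) (T T1 T2 : behavior Act) :
  optimal_approximation S T T1 -> optimal_approximation S T T2 ->
  simulated T2 T1.
Proof.
move=> [A1 N1] [A2 _].
have AU := union_approx A1 A2.
have HU : simulated (UB T1 T2) T1.
  apply: NNPP => Hn; apply: N1; exists (UB T1 T2); split=> //.
  split=> //; exact: sim_left.
exact: sim_trans (sim_right T1 T2) HU.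
Qed.

Theorem theorem2 (Act : Type) (n : nat) (S : system Act n)
  (T T1 T2 : behavior Act) :
  optimal_approximation S T T1 -> optimal_approximation S T T2 ->
  sim_equiv T1 T2.
Proof. by move=> O1 O2; split; [exact: opt_dom O2 O1 | exact: opt_dom O1 O2]. Qed.
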